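(* Let $m\ge1$ and let $\Gamma_C$ be a gate with dangling edges $x_1,\dots,x_m,y_1,\dots,y_m$ consisting of $m$ ''lines'', where line $\ell$ runs from dangling edge $x_\ell$ to dangling edge $y_\ell$, every two lines cross exactly once, each crossing is a vertex with signature $\mathtt{PASS}$ at which one line uses the north/south edges and the other the west/east edges, and all edge weights are $1$. Then $\mathrm{Sig}(\Gamma_C)(x,y)=C(x,y):=(-1)^{\binom{\mathrm{hw}(x)}{2}}[y=x]$, and the cross cap function $O(x,y):=[y=x]$ satisfies $$O(x,y)=\tfrac{1-\mathrm{i}}{2}\,\mathrm{i}^{\mathrm{hw}(x)}C(x,y)+\tfrac{1+\mathrm{i}}{2}\,(-\mathrm{i})^{\mathrm{hw}(x)}C(x,y)\quad\text{for all }x,y\in\{0,1\}^m,$$ where $\mathrm{i}$ is the imaginary unit.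
   Context: $\mathtt{PASS}(1111)=-1$, $\mathtt{PASS}(0000)=\mathtt{PASS}(0101)=\mathtt{PASS}(1010)=1$, $\mathtt{PASS}=0$ otherwise (bits ordered north, east, south, west). $\mathrm{hw}(x)$ is the Hamming weight. $[\varphi]$ is the Iverson bracket. The signature of a gate $\Gamma$ with dangling edges $D$ is $\mathrm{Sig}(\Gamma,x)=\sum_{y\in\{0,1\}^{E(\Gamma)\setminus D}}w_\Gamma(xy)\prod_v f_v((xy)|_{I(v)})$. *)

(* Defs.v *)
From HB Require Import structures.
From mathcomp Require Import all_boot all_order all_algebra all_field.
Set Implicit Arguments. Unset Strict Implicit. Unset Printing Implicit Defensive.
Import Order.TTheory GRing.Theory Num.Theory.
Local Open Scope ring_scope.

Definition PASS (n e s w : bool) : algC :=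
  match n, e, s, w with
  | true, true, true, true => -1
  | false, false, false, false => 1
  | false, true, false, true => 1
  | true, false, true, false => 1
  | _, _, _, _ => 0
  end.

Definition hw (m : nat) (x : {ffun 'I_m -> bool}) : nat := (\sum_(i < m) (x i : nat))%N.

(* Line l (l : 'I_m) is cut by its m-1 crossings into m
   segments numbered 0..m-1 along the line; segment 0 is the dangling edge
   x_l and segment m-1 the dangling edge y_l.  An edge assignment is
   z : {ffun 'I_m -> m.-tuple bool}, z l giving the bits of the segments
   of line l.
   - ord l j : position (0..m-2) along line l of its crossing with line j;
     the crossing lies between segments ord l j and (ord l j).+1.
   - at the crossing of lines i < j:  ns i j = true iff line i uses the
     north/south edges (otherwise line j does);  fN i j = true iff the
     north edge is the later segment (ord .+1) of the NS line;  fE i j = true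
     iff the east edge is the later segment of the WE line. *)
Definition seg (m : nat) (z : {ffun 'I_m -> m.-tuple bool}) (l : 'I_m) (k : nat) : bool :=
  nth false (z l) k.

Definition crossing_val (m : nat) (ord : 'I_m -> 'I_m -> nat)
    (ns fN fE : 'I_m -> 'I_m -> bool) (z : {ffun 'I_m -> m.-tuple bool})
    (i j : 'I_m) : algC :=
  let p := if ns i j then i else j in
  let q := if ns i j then j else i in
  let pin := seg z p (ord p q) in
  let pout := seg z p (ord p q).+1 in
  let qin := seg z q (ord q p) in
  let qout := seg z q (ord q p).+1 in
  let north := if fN i j then pout else pin in
  let south := if fN i j then pin else pout in
  let east := if fE i j then qout else qin in
  let west := if fE i j then qin else qout in
  PASS north east south west.

Definition SigC (m : nat) (ord : 'I_m -> 'I_m -> nat) (ns fN fE : 'I_m -> 'I_m -> bool)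
    (x y : {ffun 'I_m -> bool}) : algC :=
  \sum_(z : {ffun 'I_m -> m.-tuple bool} |
          [forall l, (seg z l 0 == x l) && (seg z l m.-1 == y l)])
    \prod_(i : 'I_m) \prod_(j : 'I_m | (i < j)%N) crossing_val ord ns fN fE z i j.

(* Valid crossing orders: every line meets every other line exactly once,
   at distinct interior positions 0..m-2. *)
Definition valid_order (m : nat) (ord : 'I_m -> 'I_m -> nat) : Prop :=
  (forall l j : 'I_m, j != l -> (ord l j).+1 < m)%N /\
  (forall l j k : 'I_m, j != l -> k != l -> ord l j = ord l k -> j = k).

Definition Cfun (m : nat) (x y : {ffun 'I_m -> bool}) : algC :=
  (-1) ^+ 'C(hw x, 2) * (y == x)%:R.

Definition Ofun (m : nat) (x y : {ffun 'I_m -> bool}) : algC := (y == x)%:R.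

(* Main.v *)
Require Import Defs.
From HB Require Import structures.
From mathcomp Require Import all_boot all_order all_algebra all_field.
From mathcomp Require Import ring.
Import Order.TTheory GRing.Theory Num.Theory.
Local Open Scope ring_scope.

Lemma ord_surj (m : nat) (ord : 'I_m -> 'I_m -> nat) (hord : valid_order ord)
  (l : 'I_m) (k : nat) : (k.+1 < m)%N -> exists2 j, j != l & ord l j = k.
Proof.
case: hord => hb hi hk.
set s := [seq ord l j | j <- enum (predC1 l)].
have us : uniq s.
  rewrite map_inj_in_uniq ?enum_uniq // => a b.
  rewrite !mem_enum /= => ha hb' e; exact: hi e.
have ss : {subset s <= iota 0 m.-1}.
  move=> v /mapP [j]; rewrite mem_enum /= => hj ->.
  rewrite mem_iota /= add0n; have := hb l j hj; case: (m) => //.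
have sz : (size (iota 0 m.-1) <= size s)%N.
  by rewrite size_iota size_map -cardE cardC1 card_ord.
have [_ e] := uniq_min_size us ss sz.
have : k \in s by rewrite e mem_iota /= add0n; case: (m) hk => //.
by case/mapP => j; rewrite mem_enum /= => hj ->; exists j.
Qed.

Lemma PASS_nz n e s w : PASS n e s w != 0 -> n = s /\ e = w.
Proof. by case: n; case: e; case: s; case: w; rewrite /= ?eqxx. Qed.

Lemma cross_nz (m : nat) (ord : 'I_m -> 'I_m -> nat) (ns fN fE : 'I_m -> 'I_m -> bool)
   z i j : crossing_val ord ns fN fE z i j != 0 ->
   seg z i (ord i j) = seg z i (ord i j).+1 /\ seg z j (ord j i) = seg z j (ord j i).+1.
Proof.
rewrite /crossing_val; case: (ns i j); case: (fN i j); case: (fE i j);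
  by move=> /PASS_nz [] /= -> ->.
Qed.

Lemma cross_const (m : nat) (ord : 'I_m -> 'I_m -> nat) (ns fN fE : 'I_m -> 'I_m -> bool)
   (hord : valid_order ord) z (c : 'I_m -> bool) i j :
   (forall l k, (k < m)%N -> seg z l k = c l) -> i != j ->
   crossing_val ord ns fN fE z i j = if c i && c j then -1 else 1.
Proof.
case: hord => hb _ hz hij.
have h1 : forall a b : 'I_m, a != b -> seg z a (ord a b) = c a /\ seg z a (ord a b).+1 = c a.
  move=> a b hab; have := hb a b; rewrite eq_sym => /(_ hab) h.
  by rewrite !hz // ltnW.
have [hi1 hi2] := h1 i j hij.
have hji : j != i by rewrite eq_sym.
have [hj1 hj2] := h1 j i hji.
rewrite /crossing_val; case: (ns i j); case: (fN i j); case: (fE i j);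
  rewrite /= ?hi1 ?hi2 ?hj1 ?hj2; by case: (c i); case: (c j).
Qed.
Lemma count_pairs n (b : 'I_n -> bool) :
  (\sum_(i < n) \sum_(j < n | (i < j)%N) (b i && b j) = 'C(\sum_(i < n) b i, 2))%N.
Proof.
elim: n b => [|n IH] b; first by rewrite !big_ord0.
rewrite big_ord_recr /= [X in 'C(X, _)]big_ord_recr /=.
have -> : (\sum_(j < n.+1 | (n < j)%N) (b ord_max && b j) = 0)%N.
  by rewrite big1 // => j hj; have := ltn_ord j; rewrite ltnS leqNgt hj.
rewrite addn0.
under eq_bigr => i _ do rewrite big_mkcond big_ord_recr /= (ltn_ord i) /= -big_mkcond.
rewrite big_split /= IH.
case: (b ord_max) => /=.
  rewrite addn1 binS bin1; congr (_ + _)%N.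
  by apply: eq_bigr => i _; rewrite andbT.
rewrite addn0 [X in (_ + X)%N](eq_bigr (fun _ => 0%N)) ?big1_eq ?addn0 // => i _; by rewrite andbF.
Qed.

Definition G (h : nat) : algC := (1 - 'i) / 2 * 'i ^+ h + (1 + 'i) / 2 * (- 'i) ^+ h.

Lemma G4 h : G h.+4 = G h.
Proof.
have i4 : ('i : algC) ^+ 4 = 1 by rewrite (exprM _ 2 2) sqrCi expr2 mulrNN mulr1.
have ni4 : (- 'i : algC) ^+ 4 = 1 by rewrite (exprM _ 2 2) sqrrN sqrCi expr2 mulrNN mulr1.
have -> : h.+4 = (h + 4)%N by rewrite addnC.
by rewrite /G !exprD i4 ni4 !mulr1.
Qed.

Lemma sgn4 h : (-1) ^+ 'C(h.+4, 2) = (-1) ^+ 'C(h, 2) :> algC.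
Proof.
rewrite -signr_odd -[RHS]signr_odd !binS !bin1 !oddD /=.
by rewrite bin0; case: (odd h); case: (odd 'C(h,2)).
Qed.

Lemma two_nz : (2 : algC) != 0. Proof. by rewrite pnatr_eq0. Qed.

Lemma Gbase : [/\ G 0 = 1, G 1 = 1, G 2 = -1 & G 3 = -1].
Proof.
have i2 := @sqrCi algC.
have h2 := two_nz.
rewrite /G; split.
- by rewrite !expr0; field.
- rewrite !expr1. have -> : (1 - 'i) / 2 * 'i + (1 + 'i) / 2 * - 'i = - ('i ^+ 2) :> algC by field.
  by rewrite i2 opprK.
- by rewrite sqrrN i2; field.
- have -> : (1 - 'i) / 2 * 'i ^+ 3 + (1 + 'i) / 2 * (- 'i) ^+ 3 = - ('i ^+ 2) ^+ 2 :> algC by field.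
  by rewrite i2 expr2 mulrNN mulr1.
Qed.

Lemma GC h : G h = (-1) ^+ 'C(h, 2).
Proof.
suff : [/\ G h = (-1) ^+ 'C(h, 2), G h.+1 = (-1) ^+ 'C(h.+1, 2),
          G h.+2 = (-1) ^+ 'C(h.+2, 2) & G h.+3 = (-1) ^+ 'C(h.+3, 2)] by case.
elim: h => [|h [IH0 IH1 IH2 IH3]].
  have [-> -> -> ->] := Gbase; split; [by rewrite bin_small | by rewrite bin_small | by rewrite binn expr1 | by rewrite (_ : 'C(3,2) = 3%N) // -signr_odd /= expr1].
by split => //; rewrite G4 sgn4.
Qed.

Theorem mainTheorem10 (m : nat) (hm : (1 <= m)%N)
    (ord : 'I_m -> 'I_m -> nat) (ns fN fE : 'I_m -> 'I_m -> bool)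
    (hord : valid_order ord) :
  (forall x y : {ffun 'I_m -> bool}, SigC ord ns fN fE x y = Cfun x y) /\
  (forall x y : {ffun 'I_m -> bool},
     Ofun x y = (1 - 'i) / 2 * 'i ^+ hw x * Cfun x y
                + (1 + 'i) / 2 * (- 'i) ^+ hw x * Cfun x y).
Proof.
split; last first.
  move=> x y; rewrite /Ofun /Cfun.
  case: (y == x); last by rewrite !mulr0 addr0.
  rewrite !mulr1 -mulrDl.
  by rewrite -/(G (hw x)) GC -exprMn mulrNN mulr1 expr1n.
move=> x y; rewrite /SigC /Cfun.
have hnz : forall z, \prod_(i : 'I_m) \prod_(j : 'I_m | (i < j)%N) crossing_val ord ns fN fE z i j != 0 ->
    forall i j : 'I_m, (i < j)%N -> crossing_val ord ns fN fE z i j != 0.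
  by move=> z hF i j hij; move/prodf_neq0: hF => /(_ i isT) /prodf_neq0 /(_ j hij).
have key : forall z, [forall l, (seg z l 0 == x l) && (seg z l m.-1 == y l)] ->
    \prod_(i : 'I_m) \prod_(j : 'I_m | (i < j)%N) crossing_val ord ns fN fE z i j != 0 ->
    (forall l k, (k < m)%N -> seg z l k = x l) /\ y = x.
  move=> z hP hF.
  have step : forall l (k : nat), (k.+1 < m)%N -> seg z l k = seg z l k.+1.
    move=> l k hk; have [j hjl <-] := @ord_surj _ _ hord l k hk.
    case: (ltngtP l j) => h.
    - exact: (@cross_nz _ _ _ _ _ _ _ _ (hnz z hF _ _ h)).1.
    - exact: (@cross_nz _ _ _ _ _ _ _ _ (hnz z hF _ _ h)).2.
    - have e : l = j by apply: val_inj.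
      by rewrite e eqxx in hjl.
  have hc : forall l k, (k < m)%N -> seg z l k = x l.
    move=> l; elim=> [|k IH] hk.
      by move/forallP: hP => /(_ l) /andP [/eqP].
    by rewrite -(step l k hk) IH // ltnW.
  split=> //; apply/ffunP => l.
  move/forallP: hP => /(_ l) /andP [_ /eqP <-].
  by apply: hc; rewrite ltn_predL.
set z0 : {ffun 'I_m -> m.-tuple bool} := [ffun l => nseq_tuple m (x l)].
have hz0 : forall l k, (k < m)%N -> seg z0 l k = x l.
  by move=> l k hk; rewrite /seg ffunE /= nth_nseq hk.
have eqz : forall z, (forall l k, (k < m)%N -> seg z l k = x l) -> z = z0.
  move=> z hc; apply/ffunP => l; apply: val_inj; apply: (@eq_from_nth _ false).
    by rewrite !size_tuple.
  by move=> k; rewrite size_tuple => hk; rewrite -/(seg z l k) hc // -/(seg z0 l k) hz0.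
case: (eqVneq y x) => [eyx | hyx]; last first.
  rewrite mulr0 big1 // => z hP; apply/eqP/negPn/negP => hF.
  by have [_ e] := key z hP hF; rewrite e eqxx in hyx.
subst y; rewrite mulr1 (bigD1 z0) /=; last first.
  apply/forallP => l; rewrite !hz0 ?eqxx // ltn_predL //.
rewrite [X in _ + X]big1 ?addr0; last first.
  move=> z /andP [hP hne]; apply/eqP/negPn/negP => hF.
  have [hc _] := key z hP hF.
  by rewrite (eqz z hc) eqxx in hne.
have -> : \prod_(i : 'I_m) \prod_(j : 'I_m | (i < j)%N) crossing_val ord ns fN fE z0 i j =
   \prod_(i : 'I_m) \prod_(j : 'I_m | (i < j)%N) (-1) ^+ (x i && x j : nat) :> algC.
  apply: eq_bigr => i _; apply: eq_bigr => j hij.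
  rewrite (@cross_const _ _ ns fN fE hord _ x _ _ hz0); last by rewrite neq_ltn hij.
  by case: (x i && x j); rewrite ?expr1 ?expr0.
under eq_bigr do rewrite prodrXr.
by rewrite prodrXr count_pairs.
Qed.
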